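(* Let $G=(V,E,w)$ be a similarity graph. If $G$ is a ground-truth input, then $G$ has perfect HC-structure. The converse does not hold: there exists a graph with perfect HC-structure that is not a ground-truth input.
   Context: Weights are symmetric and nonnegative, with $w(x,y)=0$ if $(x,y)\notin E$. $G$ is a ground-truth input (similarity graph generated from an ultrametric) if there exist an ultrametric $d$ on $V$ (a metric with $d(x,y)\le\max\{d(x,z),d(y,z)\}$ for all $x,y,z$) and a non-increasing function $f:\mathbb{R}_+\to\mathbb{R}_+$ such that $w(x,y)=f(d(x,y))$ for all $x\ne y\in V$. An HC-tree for $V=\{v_1,\dots,v_n\}$ is a rooted tree with leaf set $V$. For distinct $i,j,k$: $\{i,j|k\}$ holds in $T$ if $\mathrm{LCA}(v_i,v_j)$ is a proper descendant of $\mathrm{LCA}(v_i,v_j,v_k)$; $\{i|j|k\}$ holds if $\mathrm{LCA}(v_i,v_j)=\mathrm{LCA}(v_j,v_k)=\mathrm{LCA}(v_i,v_j,v_k)$. Triplet cost $c_T(i,j,k)$: $w_{ik}+w_{jk}$ if $\{i,j|k\}$; $w_{ij}+w_{jk}$ if $\{i,k|j\}$; $w_{ij}+w_{ik}$ if $\{j,k|i\}$; $w_{ij}+w_{jk}+w_{ik}$ if $\{i|j|k\}$. $\mathrm{TC}_G(T)=\sum c_T(i,j,k)$ and $\mathrm{BC}(G)=\sum\min\{w_{ij}+w_{ik},w_{ij}+w_{jk},w_{ik}+w_{jk}\}$ over unordered triples of distinct indices; $\rho_G(T)=\mathrm{TC}_G(T)/\mathrm{BC}(G)$ (with $0/0=1$,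 $x/0=+\infty$ for $x>0$), $\rho^*_G=\min_T\rho_G(T)$. $G$ has perfect HC-structure if $\rho^*_G=1$, equivalently if some HC-tree $T$ has $\mathrm{TC}_G(T)=\mathrm{BC}(G)$. *)

(* Defs.v *)
From HB Require Import structures.
From mathcomp Require Import all_boot all_order all_algebra.
From mathcomp Require Import reals.
Set Implicit Arguments. Unset Strict Implicit. Unset Printing Implicit Defensive.
Import Order.TTheory GRing.Theory Num.Theory.
Local Open Scope ring_scope.

Definition sim_graph (R : realType) (n : nat) (e : rel 'I_n)
  (w : 'I_n -> 'I_n -> R) : Prop :=
  [/\ forall x y, w x y = w y x,
      forall x y, 0 <= w x y &
      forall x y, ~~ e x y -> w x y = 0].

Definition ultrametric (R : realType) (n : nat) (d : 'I_n -> 'I_n -> R) : Prop :=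
  [/\ forall x y, 0 <= d x y,
      forall x y, d x y = 0 <-> x = y,
      forall x y, d x y = d y x,
      forall x y z, d x y <= d x z + d z y &
      forall x y z, d x y <= Num.max (d x z) (d y z)].

(* Ground-truth input: w(x,y) = f(d(x,y)) for x <> y, d ultrametric,
   f : R_+ -> R_+ non-increasing (only its values on R_+ matter). *)
Definition ground_truth (R : realType) (n : nat) (w : 'I_n -> 'I_n -> R) : Prop :=
  exists (d : 'I_n -> 'I_n -> R) (f : R -> R),
    [/\ ultrametric d,
        forall t, 0 <= t -> 0 <= f t,
        forall s t, 0 <= s -> s <= t -> f t <= f s &
        forall x y, x != y -> w x y = f (d x y)].

Inductive hctree (n : nat) : Type :=
| Leaf of 'I_n
| Node of seq (hctree n).

Fixpoint leaves n (t : hctree n) : seq 'I_n :=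
  match t with
  | Leaf v => [:: v]
  | Node ts => flatten (map (@leaves n) ts)
  end.

Fixpoint subtrees n (t : hctree n) : seq (hctree n) :=
  t :: match t with
       | Leaf _ => [::]
       | Node ts => flatten (map (@subtrees n) ts)
       end.

(* every internal node has at least one child, so the leaves of the tree
   are exactly the Leaf constructors *)
Fixpoint wf_tree n (t : hctree n) : bool :=
  match t with
  | Leaf _ => true
  | Node ts => ~~ nilp ts && all (@wf_tree n) ts
  end.

Definition is_hctree n (t : hctree n) : bool :=
  wf_tree t && perm_eq (leaves t) (enum 'I_n).

(* {i,j|k}: LCA(i,j) is a proper descendant of LCA(i,j,k), i.e. some node
   has i and j below it but not k. *)
Definition trip_split n (t : hctree n) (i j k : 'I_n) : bool :=
  has (fun s => [&& i \in leaves s, j \in leaves s & k \notin leaves s])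
      (subtrees t).

Definition trip_cost (R : realType) n (w : 'I_n -> 'I_n -> R) (t : hctree n)
  (i j k : 'I_n) : R :=
  if trip_split t i j k then w i k + w j k
  else if trip_split t i k j then w i j + w j k
  else if trip_split t j k i then w i j + w i k
  else w i j + w j k + w i k.

Definition TC (R : realType) n (w : 'I_n -> 'I_n -> R) (t : hctree n) : R :=
  \sum_(i < n) \sum_(j < n | (i < j)%N) \sum_(k < n | (j < k)%N) trip_cost w t i j k.

Definition BC (R : realType) n (w : 'I_n -> 'I_n -> R) : R :=
  \sum_(i < n) \sum_(j < n | (i < j)%N) \sum_(k < n | (j < k)%N)
    Num.min (w i j + w i k) (Num.min (w i j + w j k) (w i k + w j k)).

Definition perfect_HC (R : realType) n (w : 'I_n -> 'I_n -> R) : Prop :=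
  exists t : hctree n, is_hctree t /\ TC w t = BC w.

(* Main.v *)
Require Import Defs.
From HB Require Import structures.
From mathcomp Require Import all_boot all_order all_algebra.
From mathcomp Require Import reals lra.
Import Order.TTheory GRing.Theory Num.Theory.
Local Open Scope ring_scope.

Definition Mx (R : realType) n (d : 'I_n -> 'I_n -> R) (a : 'I_n) (s : seq 'I_n)
  (x : 'I_n) : bool := all (fun y => d a y <= d a x) s.
Arguments Mx {R n}.

Fixpoint build (R : realType) n (d : 'I_n -> 'I_n -> R) (fuel : nat)
  (s : seq 'I_n) : hctree n :=
  match fuel with
  | 0%N => Node [::]
  | fuel'.+1 =>
    match s with
    | [::] => Node [::]
    | a :: s' =>
      if s' is [::] then Leaf a else
      Node [:: build R n d fuel' (filter (predC (Mx d a (a :: s'))) (a :: s'));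
               build R n d fuel' (filter (Mx d a (a :: s')) (a :: s'))]
    end
  end.
Arguments build {R n}.

Lemma exists_max (R : realType) (T : eqType) (g : T -> R) (s : seq T) :
  s != [::] -> exists2 m, m \in s & all (fun y => g y <= g m) s.
Proof.
elim: s => // x [|y s] IH _.
  by exists x; rewrite ?inE ?eqxx //= lexx.
have [m ms /allP mM] := IH isT.
have [le|lt] := leP (g m) (g x).
  exists x; first by rewrite inE eqxx.
  apply/allP => z; rewrite inE => /orP[/eqP->|zs]; first exact: lexx.
  exact: le_trans (mM z zs) le.
exists m; first by rewrite inE ms orbT.
apply/allP => z; rewrite inE => /orP[/eqP->|zs]; [exact: ltW | exact: mM].
Qed.


Lemma cross1 (R : realType) n (d : 'I_n -> 'I_n -> R) (a : 'I_n) s x y z :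
  ultrametric d -> x \in s -> y \in s -> z \in s ->
  ~~ Mx d a s x -> ~~ Mx d a s y -> Mx d a s z ->
  d x y <= d x z /\ d x y <= d y z.
Proof.
move=> [d0 dE dS _ dU] xs ys zs.
have key u : u \in s -> ~~ Mx d a s u -> Mx d a s z -> d a u < d a z.
  move=> us /allPn [v vs]; rewrite -ltNge => lt /allP zM.
  exact: lt_le_trans lt (zM v vs).
move=> nx ny mz; have lx := key x xs nx mz; have ly := key y ys ny mz.
have gen u : d a u < d a z -> d a z <= d u z.
  move=> lu; have := dU a z u; rewrite le_max => /orP[H|H].
    by have := lt_le_trans lu H; rewrite ltxx.
  by rewrite (dS u z).
have dxy : d x y < d a z.
  apply: le_lt_trans (dU x y a) _; rewrite gt_max !(dS _ a) lx ly //.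
split; apply: ltW; apply: lt_le_trans dxy _; exact: gen.
Qed.

Arguments cross1 {R n d a s x y z}.

Lemma cross2 (R : realType) n (d : 'I_n -> 'I_n -> R) (a : 'I_n) s x y z :
  ultrametric d -> x \in s -> y \in s -> z \in s ->
  Mx d a s x -> Mx d a s y -> ~~ Mx d a s z ->
  d x y <= d x z /\ d x y <= d y z.
Proof.
move=> [d0 dE dS _ dU] xs ys zs /allP mx /allP my /allPn [v vs].
rewrite -ltNge => lt.
have lx : d a z < d a x := lt_le_trans lt (mx v vs).
have ly : d a z < d a y := lt_le_trans lt (my v vs).
have exy : d a x = d a y by apply/eqP; rewrite eq_le mx // my.
have gen u : d a z < d a u -> d a u <= d u z.
  move=> lu; have := dU a u z; rewrite le_max => /orP[H|H].
    by have := lt_le_trans lu H; rewrite ltxx.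
  by [].
have dxy : d x y <= d a x.
  apply: le_trans (dU x y a) _; rewrite ge_max !(dS _ a) exy lexx //.
split; apply: le_trans dxy _; first exact: gen.
by rewrite exy; apply: gen.
Qed.

Arguments cross2 {R n d a s x y z}.

Lemma build_node (R : realType) n (d : 'I_n -> 'I_n -> R) f a b s :
  build d f.+1 (a :: b :: s) =
  Node [:: build d f (filter (predC (Mx d a (a :: b :: s))) (a :: b :: s));
           build d f (filter (Mx d a (a :: b :: s)) (a :: b :: s))].
Proof. by []. Qed.

Lemma leaves_node n (t1 t2 : hctree n) :
  leaves (Node [:: t1; t2]) = leaves t1 ++ leaves t2.
Proof. by rewrite /= cats0. Qed.

Lemma ts_node n (t1 t2 : hctree n) x y z :
  trip_split (Node [:: t1; t2]) x y z =
  [&& x \in leaves (Node [:: t1; t2]), y \in leaves (Node [:: t1; t2])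
    & z \notin leaves (Node [:: t1; t2])]
  || (trip_split t1 x y z || trip_split t2 x y z).
Proof. by rewrite /trip_split /= has_cat /= !cats0. Qed.

Lemma ts_self n (t : hctree n) x y z :
  x \in leaves t -> y \in leaves t -> z \notin leaves t -> trip_split t x y z.
Proof. by case: t => [v|ts] hx hy hz; rewrite /trip_split /= hx hy hz. Qed.

Lemma build_ok (R : realType) n (d : 'I_n -> 'I_n -> R) : ultrametric d ->
  forall fuel s, uniq s -> s != [::] -> (size s <= fuel)%N ->
  let t := build d fuel s in
  [/\ wf_tree t, perm_eq (leaves t) s,
   (forall x y z, trip_split t x y z -> x \in leaves t /\ y \in leaves t),
   (forall x y z, x != y -> z \in s -> trip_split t x y z ->
      d x y <= d x z /\ d x y <= d y z) &
   (forall x y z, x \in s -> y \in s -> z \in s -> x != y -> x != z -> y != z ->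
      [|| trip_split t x y z, trip_split t x z y | trip_split t y z x])].
Proof.
move=> U; have [d0 dE dS _ dU] := U.
elim=> [|f IH] [|a s'] // Us _ Hs.
case: s' Us Hs => [|b s''] Us Hs.
  move=> t; rewrite {}/t /trip_split /=; split => //.
  - by move=> x y z; rewrite !inE orbF => /and3P[/eqP-> /eqP-> _].
  - by move=> x y z xy _; rewrite !inE orbF => /and3P[/eqP xa /eqP ya _]; move: xy; rewrite xa ya eqxx.
  - by move=> x y z; rewrite !inE => /eqP-> /eqP->; rewrite eqxx.
move=> t; rewrite {}/t build_node.
set ss := a :: b :: s'' in Us Hs *.
set M := Mx d a ss.
have aA : ~~ M a.
  apply/allPn; exists b; first by rewrite !inE eqxx orbT.
  have -> : d a a = 0 by apply/dE.
  rewrite -ltNge lt0r d0 andbT; apply/eqP => /dE ab.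
  by move: Us; rewrite /ss ab /= inE eqxx.
have [m mss mM] := @exists_max R _ (d a) ss isT.
have sAB : (size (filter (predC M) ss) + size (filter M ss) = size ss)%N.
  by rewrite !size_filter addnC count_predC.
have nA : filter (predC M) ss != [::].
  apply/eqP => E; have : a \in filter (predC M) ss by rewrite mem_filter /= aA inE eqxx.
  by rewrite E.
have nB : filter M ss != [::].
  apply/eqP => E; have : m \in filter M ss by rewrite mem_filter mss andbT.
  by rewrite E.
have hA : (size (filter (predC M) ss) <= f)%N.
  move: nB Hs; rewrite -size_eq0 -sAB; case: (size (filter M ss)) => // k _.
  by rewrite addnS ltnS => /(leq_trans (leq_addr _ _)).
have hB : (size (filter M ss) <= f)%N.
  move: nA Hs; rewrite -size_eq0 -sAB; case: (size (filter (predC M) ss)) => // k _.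
  by rewrite addSn ltnS => /(leq_trans (leq_addl _ _)).
have [wA pA SA PA QA] := IH _ (filter_uniq _ Us) nA hA.
have [wB pB SB PB QB] := IH _ (filter_uniq _ Us) nB hB.
set tA := build d f (filter (predC M) ss) in wA pA SA PA QA *.
set tB := build d f (filter M ss) in wB pB SB PB QB *.
have memA x : (x \in leaves tA) = ~~ M x && (x \in ss) by rewrite (perm_mem pA) mem_filter.
have memB x : (x \in leaves tB) = M x && (x \in ss) by rewrite (perm_mem pB) mem_filter.
have pR : perm_eq (leaves (Node [:: tA; tB])) ss.
  rewrite leaves_node; apply: perm_trans (perm_cat pA pB) _.
  by rewrite perm_catC perm_filterC.
have lift p q r : trip_split tA p q r || trip_split tB p q r ->
    trip_split (Node [:: tA; tB]) p q r.
  by move=> h; rewrite ts_node h orbT.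
have witA p q r : ~~ M p -> ~~ M q -> M r -> p \in ss -> q \in ss ->
    trip_split (Node [:: tA; tB]) p q r.
  move=> mp mq mr ps qs; apply: lift; apply/orP; left; apply: ts_self.
  - by rewrite memA mp ps.
  - by rewrite memA mq qs.
  - by rewrite memA mr.
have witB p q r : M p -> M q -> ~~ M r -> p \in ss -> q \in ss ->
    trip_split (Node [:: tA; tB]) p q r.
  move=> mp mq mr ps qs; apply: lift; apply/orP; right; apply: ts_self.
  - by rewrite memB mp ps.
  - by rewrite memB mq qs.
  - by rewrite memB (negbTE mr).
split.
- by rewrite /= wA wB.
- exact: pR.
- move=> x y z; rewrite ts_node leaves_node !mem_cat => /orP[/and3P[-> -> _]|/orP[h|h]] //.
    by have [-> ->] := SA _ _ _ h.
  by have [-> ->] := SB _ _ _ h; rewrite !orbT.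
- move=> x y z xy zs; rewrite ts_node => /orP[/and3P[_ _ hz]|/orP[h|h]].
  + by move: hz; rewrite (perm_mem pR) zs.
  + have [hx hy] := SA _ _ _ h; rewrite !memA in hx hy.
    case/andP: hx => hx xs; case/andP: hy => hy ys.
    case Mz: (M z); first exact: (cross1 U xs ys zs hx hy Mz).
    by apply: PA xy _ h; rewrite mem_filter /= Mz zs.
  + have [hx hy] := SB _ _ _ h; rewrite !memB in hx hy.
    case/andP: hx => hx xs; case/andP: hy => hy ys.
    case Mz: (M z); last by apply: (cross2 U xs ys zs hx hy); apply/negbT.
    by apply: PB xy _ h; rewrite mem_filter /= Mz zs.
- move=> x y z xs ys zs xy xz yz.
  case Mx: (M x); case My: (M y); case Mz: (M z);
  first [ by rewrite (witA x y z) ?Mx ?My ?Mz ?xs ?ys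
        | by rewrite (witA x z y) ?orbT ?Mx ?My ?Mz ?xs ?zs
        | by rewrite (witA y z x) ?orbT ?Mx ?My ?Mz ?ys ?zs
        | by rewrite (witB x y z) ?Mx ?My ?Mz ?xs ?ys
        | by rewrite (witB x z y) ?orbT ?Mx ?My ?Mz ?xs ?zs
        | by rewrite (witB y z x) ?orbT ?Mx ?My ?Mz ?ys ?zs
        | idtac ].
  + have := QB x y z; rewrite !mem_filter /= Mx My Mz xs ys zs => /(_ isT isT isT xy xz yz).
    by case/or3P => h; apply/or3P; [apply: Or31|apply: Or32|apply: Or33]; apply: lift; rewrite h orbT.
  + have := QA x y z; rewrite !mem_filter /= Mx My Mz xs ys zs => /(_ isT isT isT xy xz yz).
    by case/or3P => h; apply/or3P; [apply: Or31|apply: Or32|apply: Or33]; apply: lift; rewrite h.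
Qed.

Lemma part1 (R : realType) (n : nat) (e : rel 'I_n) (w : 'I_n -> 'I_n -> R) :
  (0 < n)%N -> sim_graph e w -> ground_truth w -> perfect_HC w.
Proof.
move=> n0 [wS w0 _] [d [f [U f0 fa fw]]].
have [d0 dE dS _ _] := U.
have ne : enum 'I_n != [::] by rewrite -size_eq0 size_enum_ord -lt0n.
have [wT pT _ PT QT] := @build_ok R n d U n (enum 'I_n) (enum_uniq _) ne
  (eq_leq (size_enum_ord n)).
exists (build d n (enum 'I_n)); split; first by rewrite /is_hctree wT pT.
have wle x y u v : x != y -> u != v -> d x y <= d u v -> w u v <= w x y.
  by move=> xy uv h; rewrite !fw //; apply: fa (d0 _ _) h.
rewrite /TC /BC; apply: eq_bigr => i _; apply: eq_bigr => j ij; apply: eq_bigr => k jk.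
have ij' : i != j by rewrite -(inj_eq val_inj) /= neq_ltn ij.
have jk' : j != k by rewrite -(inj_eq val_inj) /= neq_ltn jk.
have ik' : i != k by rewrite -(inj_eq val_inj) /= neq_ltn (ltn_trans ij jk).
have := QT i j k (mem_enum _ _) (mem_enum _ _) (mem_enum _ _) ij' ik' jk'.
rewrite /trip_cost.
case h1: (trip_split _ i j k).
  have [l1 l2] := PT i j k ij' (mem_enum _ _) h1.
  have := wle _ _ _ _ ij' ik' l1; have := wle _ _ _ _ ij' jk' l2 => c1 c2 _.
  rewrite (@min_r _ _ (w i j + w j k)); last by lra.
  by rewrite min_r //; lra.
have kj' : k != j by rewrite eq_sym.
have ji' : j != i by rewrite eq_sym.
have ki' : k != i by rewrite eq_sym.
case h2: (trip_split _ i k j).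
  have [l1 l2] := PT i k j ik' (mem_enum _ _) h2.
  have c1 := wle _ _ _ _ ik' ij' l1.
  have c2 := wle _ _ _ _ ik' kj' l2; rewrite (wS k j) in c2.
  move=> _; rewrite (@min_l _ _ (w i j + w j k)); last by lra.
  by rewrite min_r //; lra.
case h3: (trip_split _ j k i) => // _.
have [l1 l2] := PT j k i jk' (mem_enum _ _) h3.
have c1 := wle _ _ _ _ jk' ji' l1; rewrite (wS j i) in c1.
have c2 := wle _ _ _ _ jk' ki' l2; rewrite (wS k i) in c2.
rewrite min_l //; rewrite le_min; apply/andP; split; lra.
Qed.
Definition w3 (R : realType) (x y : 'I_3) : R := if x == y then 0 else (x + y)%N%:R.
Definition o0 : 'I_3 := @Ordinal 3%N 0%N isT.
Definition o1 : 'I_3 := @Ordinal 3%N 1%N isT.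
Definition o2 : 'I_3 := @Ordinal 3%N 2%N isT.
Definition t3 : hctree 3%N := Node [:: Leaf o0; Node [:: Leaf o1; Leaf o2]].

Lemma part2 (R : realType) : exists (n : nat) (e : rel 'I_n) (w : 'I_n -> 'I_n -> R),
      [/\ sim_graph e w, perfect_HC w & ~ ground_truth w].
Proof.
exists 3%N, (fun _ _ => true), (@w3 R); split.
- split.
  + by move=> x y; rewrite /w3 eq_sym addnC.
  + by move=> x y; rewrite /w3; case: ifP => // _; apply: ler0n.
  + by [].
- exists t3; split.
    rewrite /is_hctree /=; apply: uniq_perm => //; first by rewrite enum_uniq.
    by move=> [[|[|[|?]]] Hx] //; rewrite mem_enum /= !inE.
  rewrite /TC /BC; apply: eq_bigr => i _; apply: eq_bigr => j ij; apply: eq_bigr => k jk.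
  case: i j k ij jk => [[|[|[|?]]] Hi] // [[|[|[|?]]] Hj] // [[|[|[|?]]] Hk] //= _ _.
  have h1 : trip_split t3 (Ordinal Hi) (Ordinal Hj) (Ordinal Hk) = false by vm_compute.
  have h2 : trip_split t3 (Ordinal Hi) (Ordinal Hk) (Ordinal Hj) = false by vm_compute.
  have h3 : trip_split t3 (Ordinal Hj) (Ordinal Hk) (Ordinal Hi) = true by vm_compute.
  rewrite /trip_cost h1 h2 h3 /w3 /=.
  rewrite !add0n min_l // le_min; apply/andP; split; by rewrite -!natrD ler_nat.
- case=> d [f [[d0 dE dS _ dU] f0 fa fw]].
  have h01 := fw o0 o1 isT; have h02 := fw o0 o2 isT; have h12 := fw o1 o2 isT.
  rewrite /w3 /= in h01 h02 h12.
  have lt1 : d o1 o2 < d o0 o2.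
    rewrite ltNge; apply/negP => H; have := fa _ _ (d0 _ _) H.
    by rewrite -h02 -h12 ler_nat.
  have lt2 : d o0 o2 < d o0 o1.
    rewrite ltNge; apply/negP => H; have := fa _ _ (d0 _ _) H.
    by rewrite -h02 -h01 ler_nat.
  have := dU o0 o1 o2; rewrite le_max => /orP[] H.
    by have := lt_le_trans lt2 H; rewrite ltxx.
  by have := lt_le_trans (lt_trans lt1 lt2) H; rewrite ltxx.
Qed.

Theorem theorem4 (R : realType) :
  (forall (n : nat) (e : rel 'I_n) (w : 'I_n -> 'I_n -> R),
      (0 < n)%N -> sim_graph e w -> ground_truth w -> perfect_HC w) /\
  (exists (n : nat) (e : rel 'I_n) (w : 'I_n -> 'I_n -> R),
      [/\ sim_graph e w, perfect_HC w & ~ ground_truth w]).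
Proof.
split; [exact: part1 | exact: part2].
Qed.
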